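(* Consider the following optical-network model. Each link $k$ has a set $A_k\subseteq\mathbb{Z}$ of available units. Each trait $t$ has a resource $\mathrm{RI}(t)$, a nonempty integer interval, and for each link $k$ the set $t\oplus k$ of derived traits satisfies: every $t'\in t\oplus k$ has $\mathrm{RI}(t')$ a maximal integer interval contained in $\mathrm{RI}(t)\cap A_k$, and for every maximal integer interval $J\subseteq \mathrm{RI}(t)\cap A_k$ there is $t'\in t\oplus k$ with $\mathrm{RI}(t')=J$. Fix a link $k$ leaving a node $n$, and for a label $l=(t_1,t_2)$ whose both routes end at $n$ let $l\oplus e=\{(t,t_2): t\in t_1\oplus k\}\cup\{(t,t_1): t\in t_2\oplus k\}$ (the link may be appended to either route; afterwards the routes end at different nodes). Let $\mathrm{cost}$ be a real-valued function on labels such that for any labels $l_i,l_j$: if $\mathrm{cost}(l_i)\le\mathrm{cost}(l_j)$ then $\mathrm{cost}(l')\le\mathrm{cost}(l)$ for all $l'\in l_i\oplus e$ and all $l\in l_j\oplus e$. Let $l_i=(t_i,t'_i)$, $l_j=(t_j,t'_j)$ be labels whose routes all end at $n$. If $l_i\preceq'_{=} l_j$, then for every $l\in l_j\oplus e$ there exists $l'\in l_i\oplus e$ with $l'\preceq'_{\ne} l$.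
   Context: A trait describes a route in an optical network with its cost and the interval of contiguous units available along it; a label is a pair of traits of two link-disjoint routes. For labels $l_i=(t_i,t'_i)$, $l_j=(t_j,t'_j)$ with both routes ending at the same node: $\mathrm{RI}(l_i)\supseteq_n\mathrm{RI}(l_j)$ iff $\mathrm{RI}(t_i)\supseteq\mathrm{RI}(t_j)$ and $\mathrm{RI}(t'_i)\supseteq\mathrm{RI}(t'_j)$; $\mathrm{RI}(l_i)\supseteq_x\mathrm{RI}(l_j)$ iff $\mathrm{RI}(t_i)\supseteq\mathrm{RI}(t'_j)$ and $\mathrm{RI}(t'_i)\supseteq\mathrm{RI}(t_j)$; $l_i\preceq'_= l_j$ iff $\mathrm{cost}(l_i)\le\mathrm{cost}(l_j)$ and ($\mathrm{RI}(l_i)\supseteq_n\mathrm{RI}(l_j)$ or $\mathrm{RI}(l_i)\supseteq_x\mathrm{RI}(l_j)$). For labels $(a,b),(c,d)$ with routes ending at different nodes: $(a,b)\preceq'_{\ne}(c,d)$ iff $\mathrm{cost}((a,b))\le\mathrm{cost}((c,d))$, $\mathrm{RI}(a)\supseteq\mathrm{RI}(c)$ and $\mathrm{RI}(b)\supseteq\mathrm{RI}(d)$. *)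

(* Defs.v *)
From Stdlib Require Import ZArith Reals.
Open Scope Z_scope.

(* An integer interval [lo, hi] is represented by the pair (lo, hi);
   it is nonempty when lo <= hi. *)
Definition interval := (Z * Z)%type.
Definition nonempty (I : interval) : Prop := fst I <= snd I.
Definition inI (I : interval) (x : Z) : Prop := fst I <= x <= snd I.
Definition subI (I : interval) (S : Z -> Prop) : Prop := forall x, inI I x -> S x.
Definition supI (J I : interval) : Prop := forall x, inI I x -> inI J x.

Definition maximal_interval_in (J : interval) (S : Z -> Prop) : Prop :=
  nonempty J /\ subI J S /\
  (forall J', nonempty J' -> supI J' J -> subI J' S -> J' = J).

Definition label (T : Type) := (T * T)%type.

Definition label_oplus {T : Type} (oplus : T -> T -> Prop) (l l' : label T) : Prop :=
  (exists t, oplus (fst l) t /\ l' = (t, snd l)) \/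
  (exists t, oplus (snd l) t /\ l' = (t, fst l)).

Definition sup_n {T : Type} (RI : T -> interval) (li lj : label T) : Prop :=
  supI (RI (fst li)) (RI (fst lj)) /\ supI (RI (snd li)) (RI (snd lj)).
Definition sup_x {T : Type} (RI : T -> interval) (li lj : label T) : Prop :=
  supI (RI (fst li)) (RI (snd lj)) /\ supI (RI (snd li)) (RI (fst lj)).

(* dominance for labels whose routes end at the same node *)
Definition dom_eq {T : Type} (RI : T -> interval) (cost : label T -> R)
    (li lj : label T) : Prop :=
  (cost li <= cost lj)%R /\ (sup_n RI li lj \/ sup_x RI li lj).

(* dominance for labels whose routes end at different nodes *)
Definition dom_ne {T : Type} (RI : T -> interval) (cost : label T -> R)
    (l1 l2 : label T) : Prop :=
  (cost l1 <= cost l2)%R /\ supI (RI (fst l1)) (RI (fst l2)) /\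
  supI (RI (snd l1)) (RI (snd l2)).

(* Main.v *)
Require Import Defs.
From Stdlib Require Import ZArith Reals Lia Classical.

Lemma zmin_ex_aux (P : Z -> Prop) (b : Z) :
  (forall x, P x -> b <= x) ->
  forall k : nat, forall x0, P x0 -> Z.to_nat (x0 - b) = k ->
  exists m, P m /\ forall y, P y -> m <= y.
Proof.
  intros Hb k. induction k as [k IH] using lt_wf_ind. intros x0 Hx0 Hk.
  destruct (classic (exists y, P y /\ y < x0)) as [[y [Hy Hlt]]|Hno].
  - apply (IH (Z.to_nat (y - b))) with y; auto.
    specialize (Hb y Hy). lia.
  - exists x0. split; auto. intros y Hy.
    destruct (Z_lt_le_dec y x0); auto. exfalso; eauto.
Qed.

Lemma zmin_ex (P : Z -> Prop) (b x0 : Z) :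
  (forall x, P x -> b <= x) -> P x0 ->
  exists m, P m /\ forall y, P y -> m <= y.
Proof. intros; eapply zmin_ex_aux; eauto. Qed.

Lemma zmax_ex (P : Z -> Prop) (b x0 : Z) :
  (forall x, P x -> x <= b) -> P x0 ->
  exists m, P m /\ forall y, P y -> y <= m.
Proof.
  intros Hb H0.
  destruct (zmin_ex (fun y => P (- y)) (- b) (- x0)) as [m [Hm Hmin]].
  - intros x Hx. specialize (Hb _ Hx). lia.
  - now rewrite Z.opp_involutive.
  - exists (- m). split; auto. intros y Hy.
    specialize (Hmin (- y)). rewrite Z.opp_involutive in Hmin. specialize (Hmin Hy). lia.
Qed.

Lemma extend_max (J I : interval) (S : Z -> Prop) :
  nonempty J -> subI J S -> (forall x, S x -> inI I x) ->
  exists J', maximal_interval_in J' S /\ supI J' J.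
Proof.
  destruct J as [lo hi]. unfold nonempty, subI, inI, supI, maximal_interval_in; simpl.
  intros Hne HJ HS. simpl in *.
  destruct (zmin_ex (fun x => fst I <= x <= lo /\ forall z, x <= z <= hi -> S z) (fst I) lo)
    as [lo' [[Hlo1 Hlo2] Hlomin]].
  { intros x [[? ?] ?]; auto. }
  { split; [|auto]. split; [|lia]. destruct (HS lo (HJ lo ltac:(lia))); auto. }
  destruct (zmax_ex (fun y => hi <= y <= snd I /\ forall z, lo' <= z <= y -> S z) (snd I) hi)
    as [hi' [[Hhi1 Hhi2] Hhimax]].
  { intros x [[? ?] ?]; auto. }
  { split; [|auto]. split; [lia|]. destruct (HS hi (HJ hi ltac:(lia))); auto. }
  exists (lo', hi'). simpl. split; [split; [unfold nonempty; simpl; lia | split]|].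
  - intros x Hx. unfold inI in Hx; simpl in Hx. apply Hhi2. lia.
  - intros [a c] Hne' Hsup Hsub. unfold nonempty, supI, subI, inI in *; simpl in *.
    assert (Ha : a <= lo') by (destruct (Hsup lo'); lia).
    assert (Hc : hi' <= c) by (destruct (Hsup hi'); lia).
    assert (Hal : lo' <= a).
    { apply Hlomin. split.
      - split; [|lia]. destruct (HS a (Hsub a ltac:(lia))); auto.
      - intros z Hz. apply Hsub. lia. }
    assert (Hcl : c <= hi').
    { apply Hhimax. split.
      - split; [lia|]. destruct (HS c (Hsub c ltac:(lia))); auto.
      - intros z Hz. apply Hsub. lia. }
    f_equal; lia.
  - intros x Hx. unfold inI in *; simpl in *. lia.
Qed.

Theorem proposition6
  (T : Type) (RI : T -> interval)
  (Node : Type) (endn : T -> Node) (n h : Node)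
  (A : Z -> Prop) (oplus : T -> T -> Prop)
  (HRI : forall t, nonempty (RI t))
  (Hder1 : forall t t', oplus t t' ->
     maximal_interval_in (RI t') (fun x => inI (RI t) x /\ A x))
  (Hder2 : forall t J, maximal_interval_in J (fun x => inI (RI t) x /\ A x) ->
     exists t', oplus t t' /\ RI t' = J)
  (Hend : forall t t', endn t = n -> oplus t t' -> endn t' = h)
  (Hnh : n <> h)
  (cost : label T -> R)
  (Hcost : forall li lj, (cost li <= cost lj)%R ->
     forall l' l, label_oplus oplus li l' -> label_oplus oplus lj l ->
       (cost l' <= cost l)%R)
  (li lj : label T)
  (Hi1 : endn (fst li) = n) (Hi2 : endn (snd li) = n)
  (Hj1 : endn (fst lj) = n) (Hj2 : endn (snd lj) = n)
  (Hdom : dom_eq RI cost li lj) :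
  forall l, label_oplus oplus lj l ->
    exists l', label_oplus oplus li l' /\ dom_ne RI cost l' l.
Proof.
  assert (Key : forall a b t, supI (RI a) (RI b) -> oplus b t ->
            exists t', oplus a t' /\ supI (RI t') (RI t)).
  { intros a b t Hab Hbt.
    destruct (Hder1 _ _ Hbt) as [Hne [Hsub _]].
    destruct (extend_max (RI t) (RI a) (fun x => inI (RI a) x /\ A x)) as [J' [HJ' Hsup]].
    - auto.
    - intros x Hx. destruct (Hsub x Hx). split; auto.
    - intros x [? ?]; auto.
    - destruct (Hder2 _ _ HJ') as [t' [Ht' Heq]]. exists t'. rewrite Heq. auto. }
  destruct Hdom as [Hc [[Hn1 Hn2]|[Hx1 Hx2]]]; intros l Hl;
  destruct Hl as [[t [Ht ->]]|[t [Ht ->]]] eqn:El.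
  - destruct (Key _ _ _ Hn1 Ht) as [t' [Ht' Hs]].
    assert (Hl' : label_oplus oplus li (t', snd li)) by (left; eauto).
    exists (t', snd li). split; auto. split; [|split; auto].
    eapply Hcost; eauto.
  - destruct (Key _ _ _ Hn2 Ht) as [t' [Ht' Hs]].
    assert (Hl' : label_oplus oplus li (t', fst li)) by (right; eauto).
    exists (t', fst li). split; auto. split; [|split; auto].
    eapply Hcost; eauto.
  - destruct (Key _ _ _ Hx2 Ht) as [t' [Ht' Hs]].
    assert (Hl' : label_oplus oplus li (t', fst li)) by (right; eauto).
    exists (t', fst li). split; auto. split; [|split; auto].
    eapply Hcost; eauto.
  - destruct (Key _ _ _ Hx1 Ht) as [t' [Ht' Hs]].
    assert (Hl' : label_oplus oplus li (t', snd li)) by (left; eauto).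
    exists (t', snd li). split; auto. split; [|split; auto].
    eapply Hcost; eauto.
Qed.
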